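(* Let $n\ge 1$, $m=2$, $0\le k\le n-1$. There is a learning algorithm that, given $n$ and $k$, exactly identifies every complete acyclic $k$-bounded binary CP-net $N^*$ over $n$ variables using $O(n\mathcal{U}_k+e_{N^*}\log_2(n))$ membership queries over swap examples in $\mathcal{X}_{swap}$, where $e_{N^*}$ is the number of edges of $N^*$.
   Context: Variables $V=\{v_1,\dots,v_n\}$, each with a domain of size $2$. An outcome assigns a value to every variable; $\mathcal{O}_X$ denotes assignments to $X\subseteq V$. A complete CP-net specifies for each $v_i$ a parent set $Pa(v_i)\subseteq V\setminus\{v_i\}$ and, for each context $\gamma\in\mathcal{O}_{Pa(v_i)}$, a strict order $\succ^{v_i}_\gamma$ on $D_{v_i}$; parents are non-dummy. Acyclic: the graph with edges $(v_j,v_i)$, $v_j\in Pa(v_i)$, is acyclic; $k$-bounded: all $|Pa(v_i)|\le k$. Improving flip: changing only $v_i$ to the value preferred under $\succ^{v_i}_{o[Pa(v_i)]}$; $o'\succ o$ iff a nonempty sequence of improving flips leads from $o$ to $o'$. A swap is an ordered pair $x=(x.1,x.2)$ of outcomes differing in exactly one variable; $\mathcal{X}_{swap}$ contains exactly one of the two orderings of each such pair (fixed arbitrarily). A membership query for $x$ returns $1$ iff $x.1\succ x.2$ under the unknown target $N^*$ (answers always correct). $\mathcal{U}_k$ is the smallest size of a set $S\subseteq\{0,1\}^{n-1}$ whose projection onto every set of $k$ coordinates contains all $2^k$ binary vectors. *)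

(* Defs.v *)
From mathcomp Require Import all_boot.
Set Implicit Arguments. Unset Strict Implicit. Unset Printing Implicit Defensive.

Definition outcome (n : nat) := {ffun 'I_n -> bool}.

Definition flip n (o : outcome n) (i : 'I_n) : outcome n :=
  [ffun j => if j == i then ~~ o i else o j].

(* A complete binary CP-net: parent sets and, for each variable, its CPT.
   cpt i o = the preferred value of v_i in the context o[Pa(v_i)]
   (well-formedness below requires cpt i to depend only on o restricted to
   Pa(v_i), so this is the CPT indexed by contexts; on a 2-element domain a
   strict order is determined by its preferred value). *)
Record cpnet (n : nat) := CPNet {
  Pa : {ffun 'I_n -> {set 'I_n}};
  cpt : {ffun 'I_n -> {ffun outcome n -> bool}} }.

Definition parent_rel n (N : cpnet n) : rel 'I_n := fun j i => j \in Pa N i.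

Definition valid_cpnet n (k : nat) (N : cpnet n) : Prop :=
  (forall i : 'I_n, i \notin Pa N i) /\
  (forall (i : 'I_n) (o o' : outcome n),
      (forall j, j \in Pa N i -> o j = o' j) -> cpt N i o = cpt N i o') /\
  (forall (i j : 'I_n), j \in Pa N i ->
      exists o : outcome n, cpt N i o != cpt N i (flip o j)) /\
  (forall (i j : 'I_n), j \in Pa N i -> ~~ connect (parent_rel N) i j) /\
  (forall i : 'I_n, #|Pa N i| <= k).

Definition nedges n (N : cpnet n) : nat := \sum_(i : 'I_n) #|Pa N i|.

Definition impflip n (N : cpnet n) : rel (outcome n) :=
  fun o o' => [exists i : 'I_n, (o i != cpt N i o) && (o' == flip o i)].

Definition prefers n (N : cpnet n) (o' o : outcome n) : bool :=
  [exists o1, impflip N o o1 && connect (impflip N) o1 o'].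

(* A swap is encoded by (o, i), standing for the ordered pair (o, flip o i).
   An orientation sel picks exactly one of the two orderings of each swap pair:
   X_swap = { (o, flip o i) | sel o i }. *)
Definition swap_orientation n (sel : outcome n -> 'I_n -> bool) : Prop :=
  forall (o : outcome n) (i : 'I_n), sel (flip o i) i = ~~ sel o i.

Definition mquery n (N : cpnet n) (q : outcome n * 'I_n) : bool :=
  prefers N q.1 (flip q.1 q.2).

(* Adaptive (deterministic) query algorithms, as decision trees. *)
Inductive qtree (Q R : Type) : Type :=
| Leaf : R -> qtree Q R
| Ask : Q -> (bool -> qtree Q R) -> qtree Q R.

Fixpoint exec (Q R : Type) (ok ans : Q -> bool) (t : qtree Q R)
  : option (R * nat) :=
  match t with
  | Leaf r => Some (r, 0)
  | Ask q f =>
      if ok q then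
        match exec ok ans (f (ans q)) with
        | Some (r, c) => Some (r, c.+1)
        | None => None
        end
      else None
  end.

Definition kcover (n k : nat) (S : {set {ffun 'I_n.-1 -> bool}}) : bool :=
  [forall K : {set 'I_n.-1}, (#|K| == k) ==>
     [forall v : {ffun 'I_n.-1 -> bool},
        [exists s in S, [forall j in K, s j == v j]]]].

Lemma kcover_exists (n k : nat) :
  exists m, [exists S : {set {ffun 'I_n.-1 -> bool}}, kcover k S && (#|S| == m)].
Proof.
exists #|[set: {ffun 'I_n.-1 -> bool}]|; apply/existsP.
exists [set: {ffun 'I_n.-1 -> bool}]; rewrite eqxx andbT.
apply/forallP=> K; apply/implyP=> _; apply/forallP=> v; apply/existsP.
exists v; rewrite in_setT /=; apply/forallP=> j; apply/implyP=> _; exact: eqxx.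
Qed.

Definition Ucov (n k : nat) : nat := ex_minn (kcover_exists n k).

(* Main.v *)
Require Import Defs.
From mathcomp Require Import all_boot.
From mathcomp Require Import zify.
Set Implicit Arguments. Unset Strict Implicit. Unset Printing Implicit Defensive.

Fixpoint bindq (Q A B : Type) (t : qtree Q A) (f : A -> qtree Q B) : qtree Q B :=
  match t with
  | Leaf a => f a
  | Ask q g => Ask q (fun b => bindq (g b) f)
  end.

Lemma exec_bind (Q A B : Type) (ok ans : Q -> bool) (t : qtree Q A)
  (f : A -> qtree Q B) a c r c' :
  exec ok ans t = Some (a, c) -> exec ok ans (f a) = Some (r, c') ->
  exec ok ans (bindq t f) = Some (r, c + c').
Proof.
elim: t c => [a0|q g IH] c /=.
  by case=> -> <-.
case: (ok q) => //; case E: (exec ok ans (g (ans q))) => [[a1 c1]|] // [ea <-] H.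
subst a1; by rewrite (IH _ _ E H) addSn.
Qed.

Section Consistency.
Variables (n k : nat) (N : cpnet n).
Hypothesis HN : valid_cpnet k N.

Lemma cpt_dep i (o o' : outcome n) :
  (forall j, j \in Pa N i -> o j = o' j) -> cpt N i o = cpt N i o'.
Proof. by case: HN => _ [H _]; apply: H. Qed.

Lemma cpt_flip i (o : outcome n) : cpt N i (flip o i) = cpt N i o.
Proof.
apply: cpt_dep => j jP; rewrite ffunE; case: eqP => // ji; subst j.
by case: HN => H _; move: (H i); rewrite jP.
Qed.

Lemma no_cycle x y : impflip N x y -> connect (impflip N) y x -> False.
Proof.
move=> Hxy Hyx.
pose R z := connect (impflip N) x z && connect (impflip N) z x.
pose F := [set u | [exists z, R z && (z u != x u)]].
have yR : R y by rewrite /R Hyx andbT connect1.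
case/existsP: Hxy => i /andP [_ /eqP ey].
have iF : i \in F.
  rewrite inE; apply/existsP; exists y; rewrite yR ey ffunE eqxx /=.
  by case: (x i).
pose anc v := #|[set u | connect (parent_rel N) u v]|.
case: (arg_minnP anc iF) => v vF vmin.
have Pafix : forall z, R z -> forall j, j \in Pa N v -> z j = x j.
  move=> z Rz j jP; apply/eqP; apply: contraT => neq.
  have jF : j \in F by rewrite inE; apply/existsP; exists z; rewrite Rz neq.
  suff lt : anc j < anc v by have := vmin j jF; rewrite leqNgt lt.
  apply: proper_card; apply/properP; split.
    apply/subsetP => u; rewrite !inE => cuj.
    by apply: connect_trans cuj (connect1 _).
  exists v; first by rewrite inE connect0.
  rewrite inE; case: HN => _ [_ [_ [H _]]]; exact: H.
have cc : forall z, R z -> cpt N v z = cpt N v x.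
  by move=> z Rz; apply: cpt_dep => j jP; apply: Pafix.
have keep : forall p a, path (impflip N) a p -> R a -> a v = cpt N v x ->
    R (last a p) -> (last a p) v = cpt N v x.
  elim=> [|b p IH] a //= /andP [ab pp] Ra av Rl.
  apply: IH => //; last first.
    case/existsP: ab => u /andP [au /eqP ->].
    rewrite ffunE; case: eqP => [vu|_ //]; subst u.
    by move: au; rewrite cc // av eqxx.
  apply/andP; split.
    by case/andP: Ra => Ra _; apply: connect_trans Ra (connect1 ab).
  case/andP: Rl => _ Rl; apply: connect_trans Rl.
  by apply/connectP; exists p.
have xR : R x by rewrite /R connect0.
have vF2 : v \in F := vF. move: vF2; rewrite inE => /existsP [z /andP [Rz zv]].
case: (boolP (x v == cpt N v x)) => [/eqP xv | xv].
  case/andP: (Rz) => /connectP [p pp ez] _.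
  have := keep p x pp xR xv; rewrite -ez => /(_ Rz).
  by move/eqP: zv; rewrite xv.
case/andP: (Rz) => _ /connectP [p pp ez].
have zc : z v = cpt N v x.
  by move: zv xv; case: (z v); case: (x v); case: (cpt N v x).
have := keep p z pp Rz zc; rewrite -ez => /(_ xR) /eqP.
by rewrite (negbTE xv).
Qed.

Lemma mquery_eq (o : outcome n) i : mquery N (o, i) = (o i == cpt N i o).
Proof.
rewrite /mquery /prefers /=.
case: (boolP (o i == cpt N i o)) => H.
  apply/existsP; exists o; rewrite connect0 andbT.
  apply/existsP; exists i; rewrite cpt_flip ffunE eqxx.
  apply/andP; split.
    by move/eqP: H => <-; case: (o i).
  apply/eqP/ffunP => j; rewrite !ffunE; case: eqP => [->|] //.
  by rewrite eqxx negbK.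
apply/negbTE/negP; rewrite /prefers => /existsP [o1 /andP [h1 h2]].
apply: (@no_cycle o (flip o i)).
  by apply/existsP; exists i; rewrite H eqxx.
exact: connect_trans (connect1 h1) h2.
Qed.

End Consistency.

Section Alg.
Variable n : nat.
Variable sel : outcome n -> 'I_n -> bool.
Variable S : {set {ffun 'I_n.-1 -> bool}}.
Local Notation T := (qtree (outcome n * 'I_n)).

Definition base (o : outcome n) i := if sel o i then o else flip o i.
Definition askcpt R (o : outcome n) (i : 'I_n) (kk : bool -> T R) : T R :=
  Ask (base o i, i) (fun a => kk (a == base o i i)).

Fixpoint askall i (l : seq (outcome n)) : T (seq (outcome n * bool)) :=
  match l with
  | [::] => Leaf _ [::]
  | o :: l' => askcpt o i (fun b => bindq (askall i l') (fun tb => Leaf _ ((o, b) :: tb)))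
  end.

Definition agree (P : {set 'I_n}) (x y : outcome n) := [forall j in P, x j == y j].

Definition findpair P (tb : seq (outcome n * bool)) :=
  ohead [seq ab <- [seq (a, b) | a <- tb, b <- tb] |
           agree P ab.1.1 ab.2.1 && (ab.1.2 != ab.2.2)].

Definition mix (x y : outcome n) (D : seq 'I_n) : outcome n :=
  [ffun j => if j \in D then y j else x j].

Fixpoint bsearch i m (x : outcome n) (bx : bool) (y : outcome n) (D : seq 'I_n) : T 'I_n :=
  match m with
  | 0 => Leaf _ (head i D)
  | m'.+1 => if size D <= 1 then Leaf _ (head i D) else
      askcpt (mix x y (take (size D)./2 D)) i (fun bz =>
        if bz != bx then bsearch i m' x bx (mix x y (take (size D)./2 D)) (take (size D)./2 D)
        else bsearch i m' (mix x y (take (size D)./2 D)) bz y (drop (size D)./2 D))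
  end.

Definition Mq := up_log 2 n.

Fixpoint loop i tb f (P : {set 'I_n}) : T {set 'I_n} :=
  match f with
  | 0 => Leaf _ P
  | f'.+1 =>
    match findpair P tb with
    | None => Leaf _ P
    | Some (xb, yb) =>
      bindq (bsearch i Mq xb.1 xb.2 yb.1 [seq j <- enum 'I_n | xb.1 j != yb.1 j])
            (fun j => loop i tb f' (j |: P))
    end
  end.

Definition ext i (s : {ffun 'I_n.-1 -> bool}) : outcome n :=
  [ffun j => if unlift i j is Some j' then s j' else false].

Definition lookup P (tb : seq (outcome n * bool)) (o : outcome n) : bool :=
  if [seq p <- tb | agree P p.1 o] is p :: _ then p.2 else false.

Definition learn_var i : T ({set 'I_n} * {ffun outcome n -> bool}) :=
  bindq (askall i (map (ext i) (enum S))) (fun tb =>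
    bindq (loop i tb n set0) (fun P => Leaf _ (P, [ffun o => lookup P tb o]))).

Fixpoint mapq A B (f : A -> T B) (l : seq A) : T (seq B) :=
  match l with
  | [::] => Leaf _ [::]
  | a :: l' => bindq (f a) (fun b => bindq (mapq f l') (fun bs => Leaf _ (b :: bs)))
  end.

Definition dflt : {set 'I_n} * {ffun outcome n -> bool} := (set0, [ffun _ => false]).

Definition learner : T (cpnet n) :=
  bindq (mapq learn_var (enum 'I_n)) (fun res =>
    Leaf _ (CPNet [ffun i : 'I_n => (nth dflt res i).1] [ffun i : 'I_n => (nth dflt res i).2])).

End Alg.

Lemma half_bounds d m : d <= 2 ^ m.+1 -> d./2 <= 2 ^ m /\ d - d./2 <= 2 ^ m.
Proof.
move=> h; move: h; rewrite expnS; have := odd_double_half d; rewrite -muln2.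
have := leq_b1 (odd d); lia.
Qed.

Lemma extend (T : finType) (A : {set T}) k :
  #|A| <= k <= #|T| -> exists2 K : {set T}, A \subset K & #|K| = k.
Proof.
case/andP=> h1 h2.
have [m em] : exists m, k = #|A| + m by exists (k - #|A|); lia.
subst k; clear h1; elim: m A h2 => [|m IH] A h2.
  by exists A; rewrite ?addn0.
have : 0 < #|~: A| by have := cardsC A; lia.
case/card_gt0P => x; rewrite inE => xA.
have e1 : #|x |: A| = #|A|.+1 by rewrite cardsU1 xA.
have h3 : #|x |: A| + m <= #|T| by rewrite e1; lia.
have [K sK cK] := IH (x |: A) h3.
exists K; last by rewrite cK e1; lia.
by apply: subset_trans sK; apply: subsetUr.
Qed.

Lemma cpnet_eta n (N : cpnet n) : N = CPNet (Pa N) (cpt N).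
Proof. by case: N. Qed.

Lemma ohead_mem (T : eqType) (s : seq T) a : ohead s = Some a -> a \in s.
Proof. by case: s => //= b s [<-]; rewrite mem_head. Qed.

Lemma ohead_none (T : Type) (s : seq T) : ohead s = None -> s = [::].
Proof. by case: s. Qed.

Section Spec.
Variables (n k : nat) (sel : outcome n -> 'I_n -> bool) (N : cpnet n).
Hypotheses (Hsel : swap_orientation sel) (HN : valid_cpnet k N).
Local Notation runs t r c := (exec (fun q => sel q.1 q.2) (mquery N) t = Some (r, c)).

Lemma askcpt_spec R o i (kk : bool -> qtree _ R) r c :
  runs (kk (cpt N i o)) r c -> runs (askcpt sel o i kk) r c.+1.
Proof.
move=> H; rewrite /askcpt /=.
have okq : sel (base sel o i) i.
  by rewrite /base; case: ifP => // /negbT; rewrite Hsel.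
rewrite okq.
have cb : cpt N i (base sel o i) = cpt N i o.
  by rewrite /base; case: ifP => //; rewrite (cpt_flip HN).
have -> : (mquery N (base sel o i, i) == base sel o i i) = cpt N i o.
  by rewrite (mquery_eq HN) cb; case: (base sel o i i); case: (cpt N i o).
by rewrite H.
Qed.

Lemma askall_spec i l :
  runs (askall sel i l) [seq (o, cpt N i o) | o <- l] (size l).
Proof.
elim: l => [|o l IH] //=.
have E := exec_bind (f := fun tb => Leaf _ ((o, cpt N i o) :: tb)) IH (erefl _).
rewrite addn0 in E.
exact: (@askcpt_spec _ o i (fun b => bindq (askall sel i l) (fun tb => Leaf _ ((o, b) :: tb))) _ _ E).
Qed.

Lemma base_case i x y (D : seq 'I_n) :
  cpt N i x != cpt N i y -> (forall j, j \notin D -> x j = y j) -> size D <= 1 ->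
  head i D \in D /\ head i D \in Pa N i.
Proof.
move=> hxy hD; case: D hD => [|j [|]] //= hD _.
  by case/negP: hxy; apply/eqP/(cpt_dep HN) => j _; apply: hD.
rewrite inE eqxx; split => //.
apply: contraT => hj; case/negP: hxy; apply/eqP/(cpt_dep HN) => j' hj'.
apply: hD; rewrite inE; apply/eqP => e; subst j'.
by rewrite hj' in hj.
Qed.

Lemma bsearch_spec i m x y D :
  cpt N i x != cpt N i y -> (forall j, j \notin D -> x j = y j) -> size D <= 2 ^ m ->
  exists j c, [/\ runs (bsearch sel i m x (cpt N i x) y D) j c, c <= m,
                  j \in D & j \in Pa N i].
Proof.
elim: m x y D => [|m IH] x y D hxy hD hs.
  have [h1 h2] := base_case hxy hD hs.
  by exists (head i D), 0.
rewrite /=; case: ifP => hs1.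
  have [h1 h2] := base_case hxy hD hs1.
  by exists (head i D), 0.
have [hh1 hh2] := half_bounds hs.
set D1 := take (size D)./2 D; set D2 := drop (size D)./2 D.
set z := mix x y D1.
have s1 : size D1 <= 2 ^ m.
  rewrite size_take; case: ifP => h; first lia.
  have := odd_double_half (size D); rewrite -muln2; have := leq_b1 (odd (size D)); lia.
have s2 : size D2 <= 2 ^ m by rewrite size_drop.
have eD : D = D1 ++ D2 by rewrite cat_take_drop.
case: (boolP (cpt N i z != cpt N i x)) => hz.
  have [||j [c [r1 r2 r3 r4]]] := IH x z D1 _ _ s1.
  - by rewrite eq_sym.
  - by move=> j hj; rewrite /z ffunE (negbTE hj).
  exists j, c.+1; split => //; last by apply: mem_take r3.
  by apply: askcpt_spec; rewrite hz.
move: hz; rewrite negbK => /eqP hz.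
have [||j [c [r1 r2 r3 r4]]] := IH z y D2 _ _ s2.
- by rewrite hz.
- move=> j hj; rewrite /z ffunE; case: ifP => // hj1.
  apply: hD; rewrite eD mem_cat hj1; exact: hj.
exists j, c.+1; split => //; last by apply: mem_drop r3.
apply: askcpt_spec => /=; rewrite {1}hz eqxx; exact: r1.
Qed.

End Spec.

Lemma ar1 a b f : b < a -> a - b < f.+1 -> a - b.+1 < f.
Proof. lia. Qed.
Lemma ar2 a b : b < a -> a - b = (a - b.+1).+1.
Proof. lia. Qed.

Section Spec2.
Variables (n k : nat) (sel : outcome n -> 'I_n -> bool) (N : cpnet n).
Hypotheses (Hsel : swap_orientation sel) (HN : valid_cpnet k N).
Variable S : {set {ffun 'I_n.-1 -> bool}}.
Hypotheses (HS : kcover k S) (Hk : k <= n.-1) (Hn : 0 < n).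
Local Notation runs t r c := (exec (fun q => sel q.1 q.2) (mquery N) t = Some (r, c)).

Definition tb i := [seq (o, cpt N i o) | o <- map (ext i) (enum S)].

Lemma cover_agree i (o : outcome n) :
  exists2 s, s \in S & forall j, j \in Pa N i -> ext i s j = o j.
Proof.
pose A := [set j' : 'I_n.-1 | lift i j' \in Pa N i].
have hA : #|A| <= k.
  rewrite -(card_imset _ (@lift_inj _ i)).
  apply: leq_trans (_ : #|Pa N i| <= k); last by case: HN => _ [_ [_ [_ H]]].
  apply: subset_leq_card; apply/subsetP => _ /imsetP [j' hj' ->].
  by rewrite inE in hj'.
have [K AK cK] : exists2 K : {set 'I_n.-1}, A \subset K & #|K| = k.
  by apply: (@extend _ A k); rewrite hA card_ord.
move/forallP: HS => /(_ K); rewrite cK eqxx /=.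
move/forallP => /(_ [ffun j' => o (lift i j')]) /existsP [s /andP [sS /forallP hs]].
exists s => // j hj; rewrite ffunE.
case: unliftP => [j' ej|ej].
  subst j; have := hs j'; rewrite (subsetP AK) ?inE // ffunE => /eqP.
  by [].
subst j; by case: HN => H _; move: (H i); rewrite hj.
Qed.

Lemma tb_mem i p : p \in tb i -> p.2 = cpt N i p.1.
Proof. by case/mapP => o _ ->. Qed.

Lemma ext_tb i s : s \in S -> (ext i s, cpt N i (ext i s)) \in tb i.
Proof.
move=> sS; apply: (map_f (fun o => (o, cpt N i o))).
by apply: map_f; rewrite mem_enum.
Qed.

Lemma loop_spec i f (P : {set 'I_n}) : P \subset Pa N i -> #|Pa N i| - #|P| < f ->
  exists2 c, runs (loop sel i (tb i) f P) (Pa N i) c & c <= (#|Pa N i| - #|P|) * Mq n.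
Proof.
elim: f P => [|f IH] P hP hf; first by rewrite ltn0 in hf.
rewrite /=; case E: (findpair P (tb i)) => [[[x bx] [y by']]|].
  have := ohead_mem E; rewrite mem_filter /= => /andP [/andP [ag hb] /allpairsP].
  case=> [[p1 p2] [hp1 hp2 /= [e1 e2]]].
  subst p1 p2.
  have ebx := tb_mem hp1; have eby := tb_mem hp2; simpl in ebx, eby.
  subst bx by'.
  pose D := [seq j <- enum 'I_n | x j != y j].
  have [||j [c1 [r1 r2 r3 r4]]] := @bsearch_spec n k sel N Hsel HN i (Mq n) x y D hb.
  - move=> j; rewrite mem_filter mem_enum andbT negbK => /eqP //.
  - apply: leq_trans (up_logP n (isT : 1 < 2)).
    by rewrite size_filter (leq_trans (count_size _ _)) // size_enum_ord.
  have jP : j \notin P.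
    move: r3; rewrite mem_filter => /andP [hj _]; apply/negP => jP.
    by move/forallP: ag => /(_ j); rewrite jP /= (negbTE hj).
  have sub : j |: P \subset Pa N i.
    by apply/subsetP => u; rewrite !inE => /orP [/eqP -> // | /(subsetP hP)].
  have cP : #|j |: P| = #|P|.+1 by rewrite cardsU1 jP.
  have lt : #|P| < #|Pa N i|.
    apply: proper_card; apply/properP; split => //; by exists j.
  have [|c2 r5 r6] := IH (j |: P) sub; first by rewrite cP; apply: ar1.
  exists (c1 + c2); first exact: exec_bind r1 r5.
  move: r6; rewrite cP => r6.
  rewrite (ar2 lt).
  by rewrite mulSn; apply: leq_add.
exists 0 => //; congr (Some (_, _)).
apply/eqP; rewrite eqEsubset hP /=; apply/subsetP => j jPa; apply: contraT => jP.
have [o ho] : exists o : outcome n, cpt N i o != cpt N i (flip o j).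
  by case: HN => _ [_ [H _]]; apply: H.
have [s sS hs] := cover_agree i o.
have [s' sS' hs'] := cover_agree i (flip o j).
have c1 : cpt N i (ext i s) = cpt N i o by apply: cpt_dep HN _ _ _ hs.
have c2 : cpt N i (ext i s') = cpt N i (flip o j) by apply: cpt_dep HN _ _ _ hs'.
have : ((ext i s, cpt N i (ext i s)), (ext i s', cpt N i (ext i s'))) \in
        [seq ab <- [seq (a, b) | a <- tb i, b <- tb i] |
           agree P ab.1.1 ab.2.1 && (ab.1.2 != ab.2.2)].
  rewrite mem_filter /= c1 c2 ho andbT; apply/andP; split.
    apply/forallP => u; apply/implyP => uP.
    rewrite hs ?hs' ?(subsetP hP) // ffunE.
    case: (u =P j) => [eu|_]; last by [].
    by subst u; rewrite uP in jP.
  by apply: allpairs_f; [rewrite -c1 | rewrite -c2]; apply: ext_tb.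
by rewrite /findpair in E; rewrite (ohead_none E).
Qed.

Lemma lookup_spec i o : lookup (Pa N i) (tb i) o = cpt N i o.
Proof.
have [s sS hs] := cover_agree i o.
have hin : (ext i s, cpt N i (ext i s)) \in [seq p <- tb i | agree (Pa N i) p.1 o].
  rewrite mem_filter ext_tb // andbT /=.
  by apply/forallP => u; apply/implyP => uP; rewrite hs.
rewrite /lookup; case E: [seq p <- tb i | agree (Pa N i) p.1 o] => [|p ps].
  by rewrite E in hin.
have : p \in [seq p <- tb i | agree (Pa N i) p.1 o] by rewrite E mem_head.
rewrite mem_filter => /andP [ag /tb_mem ->].
apply: (cpt_dep HN) => j hj.
by move/forallP: ag => /(_ j) /implyP /(_ hj) /eqP.
Qed.

Lemma learn_var_spec i :
  exists2 c, runs (learn_var sel S i) (Pa N i, cpt N i) c &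
             c <= #|S| + #|Pa N i| * Mq n.
Proof.
have r1 := askall_spec Hsel HN i (map (ext i) (enum S)).
rewrite size_map -cardE in r1.
have hlt : #|Pa N i| - #|(set0 : {set 'I_n})| < n.
  rewrite cards0 subn0; have := (match HN with conj _ (conj _ (conj _ (conj _ H))) => H i end).
  lia.
have [c2 r2 h2] := loop_spec (sub0set (Pa N i)) hlt.
exists (#|S| + (c2 + 0)); last by rewrite cards0 subn0 in h2; lia.
apply: exec_bind r1 _.
apply: exec_bind r2 _.
rewrite /=; congr (Some ((_, _), _)).
by apply/ffunP => o; rewrite ffunE lookup_spec.
Qed.

End Spec2.

Lemma mapq_spec (n : nat) (A B : Type) (ok ans : outcome n * 'I_n -> bool) (f : A -> qtree (outcome n * 'I_n) B) (g : A -> B)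
  (w : A -> nat) :
  (forall a, exists2 c, exec ok ans (f a) = Some (g a, c) & c <= w a) ->
  forall l : seq A, exists2 c, exec ok ans (mapq f l) = Some (map g l, c) & c <= \sum_(a <- l) w a.
Proof.
move=> H; elim=> [|a l [c2 r2 h2]]; first by exists 0; rewrite ?big_nil.
have [c1 r1 h1] := H a.
exists (c1 + (c2 + 0)); last by rewrite big_cons addn0; apply: leq_add.
by apply: exec_bind r1 _; apply: exec_bind r2 _.
Qed.

Theorem theorem8 :
  exists C : nat, forall n k : nat, 1 <= n -> k <= n.-1 ->
  forall sel : outcome n -> 'I_n -> bool, swap_orientation sel ->
  exists t : qtree (outcome n * 'I_n) (cpnet n),
  forall N : cpnet n, valid_cpnet k N ->
  exists c : nat,
    exec (fun q => sel q.1 q.2) (mquery N) t = Some (N, c) /\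
    c <= C * (n * Ucov n k + nedges N * trunc_log 2 n).
Proof.
exists 2 => n k hn hk sel hsel.
rewrite /Ucov; case: ex_minnP => m /existsP [S /andP [HS /eqP cS]] _.
exists (learner sel S) => N HN.
have [c r h] := mapq_spec (ok := fun q => sel q.1 q.2) (ans := mquery N)
   (f := learn_var sel S) (g := fun i => (Pa N i, cpt N i))
   (w := fun i => #|S| + #|Pa N i| * Mq n)
   (learn_var_spec hsel HN HS hk hn) (enum 'I_n).
exists (c + 0); split.
  apply: exec_bind r _; rewrite /=; congr (Some (_, _)).
  rewrite [RHS]cpnet_eta; congr CPNet; apply/ffunP => i; rewrite ffunE;
  rewrite (nth_map i) ?size_enum_ord ?nth_ord_enum //.
move: h; rewrite big_split /= big_enum /= sum_nat_const card_ord cS.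
rewrite -big_distrl /= big_enum /= -/(nedges N) => h.
have hM : Mq n <= 2 * trunc_log 2 n.
  rewrite /Mq; case: (leqP n 1) => h1.
    have : up_log 2 n == 0 by rewrite up_log_eq0 h1 orbT.
    by move/eqP ->.
  rewrite up_log_trunc_log //.
  have := leq_trunc_log 2 (leq_pred n).
  have : 0 < trunc_log 2 n by rewrite trunc_log_gt0.
  lia.
have := leq_mul (leqnn (nedges N)) hM.
lia.
Qed.
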